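(* Let $D$ be a unique factorization domain and let $a$ be a nonzero element of $D$. Then the congruence $P_{J([a]_\sim)}$ on the semigroup $D'=D_{mult}/\sim$ has finite index, and $d(a)=|D'/P_{J([a]_\sim)}|$.
   Context: $D_{mult}$ is the multiplicative semigroup of $D$; $\sim$ is the associate relation, a congruence on $D_{mult}$; $D'=D_{mult}/\sim$ and $[x]_\sim$ denotes the $\sim$-class of $x$. $J([a]_\sim)$ is the ideal of the semigroup $D'$ generated by $[a]_\sim$. For a semigroup $S$, $H\subseteq S$, $a\in S$: $H\dots a=\{(x,y)\in S\times S: xay\in H\}$ and $P_H=\{(a,b)\in S\times S: H\dots a=H\dots b\}$ (computed here in $S=D'$). $d(a)$ is the number of pairwise non-associated divisors of $a$ in $D$ (equivalently, the number of distinct divisors of $[a]_\sim$ in $D'$). *)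

(* Defs.v *)
From HB Require Import structures.
From mathcomp Require Import all_boot all_algebra generic_quotient.
From mathcomp Require Import boolp.
Set Implicit Arguments. Unset Strict Implicit. Unset Printing Implicit Defensive.
Import GRing.Theory.
Local Open Scope ring_scope.
Local Open Scope quotient_scope.

Definition dvdr {D : idomainType} (x y : D) : Prop := exists z : D, y = x * z.

Definition assoc {D : idomainType} (x y : D) : Prop := dvdr x y /\ dvdr y x.

Definition irreducible_elt {D : idomainType} (p : D) : Prop :=
  p != 0 /\ ~ (p \is a GRing.unit) /\
  (forall y z : D, p = y * z -> y \is a GRing.unit \/ z \is a GRing.unit).

Definition UFD (D : idomainType) : Prop :=
  (forall x : D, x != 0 -> ~ (x \is a GRing.unit) ->
     exists s : seq D, (forall p, p \in s -> irreducible_elt p) /\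
                       x = \prod_(p <- s) p)
  /\
  (forall s t : seq D,
     (forall p, p \in s -> irreducible_elt p) ->
     (forall p, p \in t -> irreducible_elt p) ->
     assoc (\prod_(p <- s) p) (\prod_(p <- t) p) ->
     exists t' : seq D, perm_eq t t' /\ size s = size t' /\
       forall i, (i < size s)%N -> assoc (nth 0 s i) (nth 0 t' i)).

Definition assocb {D : idomainType} (x y : D) : bool := `[< assoc x y >].

Lemma assocb_refl (D : idomainType) : reflexive (@assocb D).
Proof. by move=> x; apply/asboolP; split; exists 1; rewrite mulr1. Qed.

Lemma assocb_sym (D : idomainType) : symmetric (@assocb D).
Proof.
by move=> x y; apply/asboolP/asboolP => -[h1 h2]; split.
Qed.

Lemma assocb_trans (D : idomainType) : transitive (@assocb D).
Proof.
move=> y x z /asboolP [[a hx] [b hy]] /asboolP [[c hz] [d hx']].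
apply/asboolP; split.
  by exists (a * c); rewrite hz hx mulrA.
by exists (d * b); rewrite hy hx' mulrA.
Qed.

Definition assoc_equiv (D : idomainType) : equiv_rel D :=
  EquivRel (@assocb D) (@assocb_refl D) (@assocb_sym D) (@assocb_trans D).

Definition Dq (D : idomainType) := {eq_quot (assoc_equiv D)}.

Definition cls {D : idomainType} (x : D) : Dq D := \pi_(Dq D) x.

(* the multiplication of D' : [x][y] = [xy] (well defined since ~ is a
   congruence on D_mult; computed on representatives) *)
Definition mulDq {D : idomainType} (X Y : Dq D) : Dq D :=
  cls (repr X * repr Y).

Section Semigroup.
Variables (S : Type) (mul : S -> S -> S).

Definition lmul1 (u : option S) (x : S) : S :=
  if u is Some u' then mul u' x else x.
Definition rmul1 (x : S) (v : option S) : S :=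
  if v is Some v' then mul x v' else x.

(* J(s) = S^1 s S^1, the ideal of S generated by s *)
Definition ideal_gen (s : S) : S -> Prop :=
  fun x => exists u v : option S, x = lmul1 u (rmul1 s v).

Definition Hdots (H : S -> Prop) (a : S) : S * S -> Prop :=
  fun xy => H (mul (mul xy.1 a) xy.2).

Definition P_H (H : S -> Prop) (a b : S) : Prop :=
  forall xy : S * S, Hdots H a xy <-> Hdots H b xy.
End Semigroup.

Definition has_index (T : Type) (R : T -> T -> Prop) (n : nat) : Prop :=
  exists f : T -> 'I_n,
    (forall i : 'I_n, exists x, f x = i) /\ (forall x y, R x y <-> f x = f y).

(* d(a) = n: the maximal number of pairwise non-associated divisors of a in D
   is n, i.e. a system of representatives of the associate classes of the
   divisors of a has n elements. *)
Definition num_divisors (D : idomainType) (a : D) (n : nat) : Prop :=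
  exists s : seq D,
    size s = n /\
    (forall x, x \in s -> dvdr x a) /\
    (forall i j, (i < size s)%N -> (j < size s)%N ->
                 assoc (nth 0 s i) (nth 0 s j) -> i = j) /\
    (forall x, dvdr x a -> exists2 y, y \in s & assoc x y).

(* Main.v *)
Require Import Defs.
From mathcomp Require Import all_boot all_algebra generic_quotient.
From mathcomp Require Import boolp.
Set Implicit Arguments. Unset Strict Implicit. Unset Printing Implicit Defensive.
Import GRing.Theory.
Local Open Scope ring_scope.
Local Open Scope quotient_scope.

Section Dv.
Variable D : idomainType.
Implicit Types x y z p : D.

Lemma dv_refl x : dvdr x x. Proof. by exists 1; rewrite mulr1. Qed.
Lemma dv_trans x y z : dvdr x y -> dvdr y z -> dvdr x z.
Proof. by move=> [a ->] [b ->]; exists (a * b); rewrite mulrA. Qed.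
Lemma dv_mulr x y : dvdr x (x * y). Proof. by exists y. Qed.
Lemma dv_mull x y : dvdr x (y * x). Proof. by exists y; rewrite mulrC. Qed.
Lemma dv_mul x y z : dvdr x y -> dvdr x (y * z).
Proof. by move=> h; apply: dv_trans h (dv_mulr _ _). Qed.
Lemma dv_mul' x y z : dvdr x y -> dvdr x (z * y).
Proof. by move=> h; apply: dv_trans h (dv_mull _ _). Qed.
Lemma dv0 x : dvdr x 0. Proof. by exists 0; rewrite mulr0. Qed.
Lemma dv1 x : dvdr 1 x. Proof. by exists x; rewrite mul1r. Qed.
Lemma dv_mon x y z : dvdr x y -> dvdr (z * x) (z * y).
Proof. by move=> [c ->]; exists c; rewrite mulrA. Qed.
Lemma dv_cancel c x y : c != 0 -> dvdr (c * x) (c * y) -> dvdr x y.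
Proof. by move=> hc [k]; rewrite -mulrA => /(mulfI hc) ->; exists k. Qed.
Lemma as_refl x : assoc x x. Proof. by split; apply: dv_refl. Qed.
Lemma as_sym x y : assoc x y -> assoc y x. Proof. by case. Qed.
Lemma as_trans x y z : assoc x y -> assoc y z -> assoc x z.
Proof. by move=> [h1 h2] [h3 h4]; split; apply: dv_trans; eauto. Qed.
Lemma as_mul x x' y y' : assoc x x' -> assoc y y' -> assoc (x * y) (x' * y').
Proof.
move=> [[a ha] [b hb]] [[c hc] [d hd]]; split.
  by exists (a * c); rewrite ha hc mulrACA.
by exists (b * d); rewrite hb hd mulrACA.
Qed.
Lemma assocbP x y : reflect (assoc x y) (assocb x y).
Proof. exact: asboolP. Qed.

Lemma dv_prod_mem q (s : seq D) : q \in s -> dvdr q (\prod_(p <- s) p).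
Proof.
elim: s => // x s IH; rewrite inE big_cons => /orP [/eqP ->|h].
  exact: dv_mulr.
exact/dv_mul'/IH.
Qed.

Hypothesis hD : UFD D.

Lemma prime_irr p x y : irreducible_elt p -> dvdr p (x * y) -> dvdr p x \/ dvdr p y.
Proof.
move=> hp [c hc]; have [pn0 [pnu pirr]] := hp.
have [->|x0] := eqVneq x 0; first by left; apply: dv0.
have [->|y0] := eqVneq y 0; first by right; apply: dv0.
case: (boolP (x \is a GRing.unit)) => xu.
  right; exists (x^-1 * c).
  by rewrite mulrCA -hc mulKr.
case: (boolP (y \is a GRing.unit)) => yu.
  left; exists (y^-1 * c).
  by rewrite mulrCA -hc [x * y]mulrC mulKr.
have [c00|c0] := eqVneq c 0.
  by move: hc; rewrite c00 mulr0 => /eqP; rewrite mulf_eq0 (negPf x0) (negPf y0).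
have [sx [hsx ex]] := hD.1 x x0 (negP xu).
have [sy [hsy ey]] := hD.1 y y0 (negP yu).
case: (boolP (c \is a GRing.unit)) => cu.
  exfalso; have : p = x * (y * c^-1) by rewrite mulrA hc mulrK.
  move/pirr => [] h; first by rewrite h in xu.
  by move: h; rewrite unitrMl ?unitrV // (negPf yu).
have [sc [hsc ec]] := hD.1 c c0 (negP cu).
have hs : forall q, q \in sx ++ sy -> irreducible_elt q.
  by move=> q; rewrite mem_cat => /orP [] ?; [apply: hsx|apply: hsy].
have ht : forall q, q \in p :: sc -> irreducible_elt q.
  by move=> q; rewrite inE => /orP [/eqP ->|]; [|apply: hsc].
have ha : assoc (\prod_(q <- sx ++ sy) q) (\prod_(q <- p :: sc) q).
  rewrite big_cat big_cons -ex -ey -ec; change (assoc (x * y) (p * c)); rewrite hc; apply: as_refl.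
have [t' [pt [sz hn]]] := hD.2 _ _ hs ht ha.
have pin : p \in t' by rewrite -(perm_mem pt) mem_head.
set i := index p t'.
have iz : (i < size (sx ++ sy))%N by rewrite sz index_mem.
have := hn i iz; rewrite nth_index // => -[_ hpq].
have := mem_nth 0 iz; rewrite mem_cat => /orP [] hm.
  by left; apply: dv_trans hpq _; rewrite ex; apply: dv_prod_mem.
by right; apply: dv_trans hpq _; rewrite ey; apply: dv_prod_mem.
Qed.


Definition allirr (s : seq D) := forall q, q \in s -> irreducible_elt q.

Lemma allirr_cons p s : allirr (p :: s) -> irreducible_elt p /\ allirr s.
Proof.
move=> h; split; first by apply: h; rewrite mem_head.
by move=> q hq; apply: h; rewrite inE hq orbT.
Qed.

Lemma F2s s : allirr s -> forall x, exists g, dvdr g (\prod_(p <- s) p) /\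
   dvdr g x /\ forall z, dvdr (\prod_(p <- s) p) (z * x) ->
                         dvdr (\prod_(p <- s) p) (z * g).
Proof.
elim: s => [|p s IH] hs x.
  exists 1; split; first exact: dv1.
  by split=> [|z _]; rewrite ?big_nil; apply: dv1.
have [hp hs'] := allirr_cons hs; have pn0 := hp.1.
rewrite big_cons; set b := \prod_(q <- s) q.
case: (pselect (dvdr p x)) => [[x' ->]|npx].
  have [g [h1 [h2 h3]]] := IH hs' x'.
  exists (p * g); split; first exact: dv_mon.
  split; first exact: dv_mon.
  move=> z; rewrite mulrCA [z * (p * g)]mulrCA => /(dv_cancel pn0)/h3.
  exact: dv_mon.
have [g [h1 [h2 h3]]] := IH hs' x.
exists g; split; first exact: dv_mul'.
split=> // z hz.
have : dvdr p (z * x) by apply: dv_trans hz; apply: dv_mulr.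
case/(prime_irr hp) => // -[z' hz']; subst z.
move: hz; rewrite -mulrA -[p * z' * g]mulrA => /(dv_cancel pn0)/h3.
exact: dv_mon.
Qed.

Fixpoint subs (s : seq D) : seq D :=
  if s is p :: s' then map (fun x => p * x) (subs s') ++ subs s' else [:: 1].

Lemma subs_dvd s y : y \in subs s -> dvdr y (\prod_(p <- s) p).
Proof.
elim: s y => [|p s IH] y /=; first by rewrite inE => /eqP ->; apply: dv1.
rewrite mem_cat big_cons => /orP [/mapP [y' hy' ->]|hy].
  exact/dv_mon/IH.
exact/dv_mul'/IH.
Qed.

Lemma subs_cover s d : allirr s -> dvdr d (\prod_(p <- s) p) ->
  exists2 y, y \in subs s & assoc d y.
Proof.
elim: s d => [|p s IH] d hs /=.
  rewrite big_nil => hd; exists 1; first by rewrite mem_head.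
  by split=> //; apply: dv1.
have [hp hs'] := allirr_cons hs; have pn0 := hp.1.
rewrite big_cons; set b := \prod_(q <- s) q => -[e he].
case: (pselect (dvdr p d)) => [[d' hd]|npd].
  subst d; move: he; rewrite -mulrA => /(mulfI pn0) he.
  have [y hy hay] := IH d' hs' (ex_intro _ e he).
  exists (p * y); first by rewrite mem_cat map_f.
  exact: as_mul (as_refl _) hay.
have : dvdr p (d * e) by rewrite -he; apply: dv_mulr.
case/(prime_irr hp) => // -[e' he']; subst e.
move: he; rewrite mulrCA => /(mulfI pn0) he.
have [y hy hay] := IH d hs' (ex_intro _ e' he).
by exists y; first by rewrite mem_cat hy orbT.
Qed.

Fixpoint ddup (l : seq D) : seq D :=
  if l is x :: l' then
    (if has (assocb x) (ddup l') then ddup l' else x :: ddup l')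
  else [::].

Lemma ddup_sub l y : y \in ddup l -> y \in l.
Proof.
elim: l => //= x l IH; case: ifP => _; first by move/IH; rewrite inE => ->; rewrite orbT.
by rewrite !inE => /orP [->|/IH ->]; rewrite ?orbT.
Qed.

Lemma ddup_cover l x : x \in l -> exists2 y, y \in ddup l & assoc x y.
Proof.
elim: l => //= z l IH; rewrite inE => /orP [/eqP ->|/IH [y hy hxy]].
  case: ifP => [/hasP [y hy /assocbP h]|_]; first by exists y.
  by exists z; [rewrite mem_head|apply: as_refl].
by case: ifP => _; exists y => //; rewrite inE hy orbT.
Qed.

Lemma ddup_pw l : pairwise (fun x y => ~~ assocb x y) (ddup l).
Proof.
elim: l => //= x l IH; case: ifP => // h /=.
by rewrite IH andbT all_predC h.
Qed.

Lemma ddup_nth l i j : (i < size (ddup l))%N -> (j < size (ddup l))%N ->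
  assoc (nth 0 (ddup l) i) (nth 0 (ddup l) j) -> i = j.
Proof.
move=> hi hj ha; have /(pairwiseP 0) hp := ddup_pw l.
case: (ltngtP i j) => // hij; exfalso.
  by move: (hp i j hi hj hij) => /negP; apply; apply/assocbP.
by move: (hp j i hj hi hij) => /negP; apply; apply/assocbP; apply: as_sym.
Qed.

Lemma fact_elt a : a != 0 -> exists2 s, allirr s & assoc a (\prod_(p <- s) p).
Proof.
move=> a0; case: (boolP (a \is a GRing.unit)) => au.
  exists [::] => //; rewrite big_nil; split; last exact: dv1.
  by exists a^-1; rewrite mulrV.
have [s [hs ->]] := hD.1 a a0 (negP au).
by exists s => //; apply: as_refl.
Qed.


Lemma dv_asr x y y' : assoc y y' -> dvdr x y -> dvdr x y'.
Proof. by move=> [h _] h'; apply: dv_trans h' h. Qed.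
Lemma dv_asl x x' y : assoc x x' -> dvdr x y -> dvdr x' y.
Proof. by move=> [_ h] h'; apply: dv_trans h h'. Qed.
Lemma dvz_as a z y y' : assoc y y' -> (dvdr a (z * y) <-> dvdr a (z * y')).
Proof.
move=> h; split; apply: dv_asr; first exact: as_mul (as_refl _) h.
exact: as_mul (as_refl _) (as_sym h).
Qed.

Lemma U_lem a d1 d2 : a != 0 -> dvdr d1 a -> dvdr d2 a ->
  (forall z, dvdr a (z * d1) <-> dvdr a (z * d2)) -> assoc d1 d2.
Proof.
move=> a0.
suff H : forall d1 d2, dvdr d1 a -> dvdr d2 a ->
  (forall z, dvdr a (z * d1) <-> dvdr a (z * d2)) -> dvdr d1 d2.
  by move=> h1 h2 h; split; apply: H => // z; rewrite h.
move=> {}d1 {}d2 [e he] h2 h.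
have : dvdr a (e * d1) by rewrite mulrC -he; apply: dv_refl.
case/h => k; rewrite he -mulrA [d1 * _]mulrCA => /mulfI -> //.
  by exists k.
by apply: contraNneq a0 => e0; rewrite he e0 mulr0.
Qed.

Lemma cls_eq x y : cls x = cls y <-> assoc x y.
Proof. by split => [/(@eqquotP _ _ (Dq D))/assocbP|/assocbP/(@eqquotP _ _ (Dq D))]. Qed.

Lemma repr_cls x : assoc (repr (cls x)) x.
Proof. by apply/cls_eq; rewrite /cls reprK. Qed.

Lemma clsK (X : Dq D) : cls (repr X) = X.
Proof. exact: reprK. Qed.

Lemma J_lem a X : ideal_gen (@mulDq D) (cls a) X <-> dvdr a (repr X).
Proof.
split.
  move=> [u [v ->]].
  have hW : dvdr a (repr (rmul1 (@mulDq D) (cls a) v)).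
    case: v => [v|] /=; last exact: dv_asr (as_sym (repr_cls a)) (dv_refl a).
    apply: dv_asr (as_sym (repr_cls _)) _; apply: dv_mul.
    exact: dv_asr (as_sym (repr_cls a)) (dv_refl a).
  case: u => [u|] //=.
  by apply: dv_asr (as_sym (repr_cls _)) _; apply: dv_mul'.
move=> [c hc]; exists None, (Some (cls c)) => /=.
rewrite -[LHS]clsK hc /mulDq; apply/cls_eq.
exact: as_sym (as_mul (repr_cls _) (repr_cls _)).
Qed.

Lemma P_lem a (A B : Dq D) :
  P_H (@mulDq D) (ideal_gen (@mulDq D) (cls a)) A B <->
  (forall z, dvdr a (z * repr A) <-> dvdr a (z * repr B)).
Proof.
have HD : forall X A Y, Hdots (@mulDq D) (ideal_gen (@mulDq D) (cls a)) A (X, Y)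
    <-> dvdr a (repr X * repr Y * repr A).
  move=> X C Y; rewrite /Hdots J_lem /= /mulDq.
  have h : assoc (repr (cls (repr (cls (repr X * repr C)) * repr Y)))
                 (repr X * repr Y * repr C).
    rewrite mulrAC; apply: as_trans (repr_cls _) _.
    exact: as_mul (repr_cls _) (as_refl _).
  by split; apply: dv_asr => //; apply: as_sym.
split.
  move=> hP z; move: (hP (cls z, cls 1)); rewrite !HD.
  have h : forall C, assoc (repr (cls z) * repr (cls 1) * C) (z * C).
    move=> C; apply: as_mul (as_refl _).
    by rewrite -[z in assoc _ z]mulr1; apply: as_mul; apply: repr_cls.
  move=> [h1 h2]; split => hz.
    exact/(dv_asr (h _))/h1/(dv_asr (as_sym (h _))).
  exact/(dv_asr (h _))/h2/(dv_asr (as_sym (h _))).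
move=> hz [X Y]; rewrite !HD; exact: hz.
Qed.

End Dv.

Theorem theorem4 (D : idomainType) (hD : UFD D) (a : D) (ha : a != 0) :
  exists n : nat,
    has_index (P_H (@mulDq D) (ideal_gen (@mulDq D) (cls a))) n /\
    num_divisors a n.
Proof.
have [s hs has] := fact_elt hD ha.
set L := ddup (subs s).
have Ldv : forall y, y \in L -> dvdr y a.
  move=> y /ddup_sub /subs_dvd h; exact: dv_asr (as_sym has) h.
have Lcov : forall d, dvdr d a -> exists2 y, y \in L & assoc d y.
  move=> d hd; have [y0 hy0 h0] := subs_cover hD hs (dv_asr has hd).
  have [y hy h1] := ddup_cover hy0; exists y => //; exact: as_trans h0 h1.
have F2a : forall x, exists g, dvdr g a /\
    (forall z, dvdr a (z * x) <-> dvdr a (z * g)).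
  move=> x; have [g [h1 [h2 h3]]] := F2s hD hs x.
  exists g; split; first exact: dv_asr (as_sym has) h1.
  move=> z; split => hz.
    exact/(dv_asl (as_sym has))/h3/(dv_asl has).
  by case: h2 => k hk; rewrite hk mulrA; apply: dv_mul.
pose G x := proj1_sig (cid (F2a x)).
have hG : forall x, dvdr (G x) a /\
    (forall z, dvdr a (z * x) <-> dvdr a (z * G x)).
  by move=> x; rewrite /G; case: cid.
have hfind : forall d, dvdr d a -> (find (assocb d) L < size L)%N.
  by move=> d /Lcov [y hy hdy]; rewrite -has_find; apply/hasP; exists y => //; apply/assocbP.
have hnth : forall d, dvdr d a -> assoc d (nth 0 L (find (assocb d) L)).
  move=> d /Lcov [y hy hdy]; apply/assocbP; apply: nth_find.
  by apply/hasP; exists y => //; apply/assocbP.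
exists (size L); split; last first.
  exists L; split => //; split => //; split => //.
  exact: ddup_nth.
pose f (X : Dq D) : 'I_(size L) := Ordinal (hfind _ (hG (repr X)).1).
exists f; split.
  move=> i; exists (cls (nth 0 L i)); apply: val_inj => /=.
  set x := repr _; have [g1 g2] := hG x.
  apply: ddup_nth; first exact: (hfind _ ltac:(eassumption)).
    exact: ltn_ord.
  apply: as_trans (as_sym (hnth _ g1)) _.
  apply: (U_lem ha g1); first by apply: (Ldv _); apply: mem_nth.
  move=> z; rewrite -g2; apply: dvz_as; exact: repr_cls.
move=> X Y; rewrite P_lem; split.
  move=> hz; apply: val_inj => /=.
  have [g1 g2] := hG (repr X); have [g1' g2'] := hG (repr Y).
  apply: ddup_nth; [exact: (hfind _ g1)|exact: (hfind _ g1')|].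
  apply: as_trans (as_sym (hnth _ g1)) _; apply: as_trans (hnth _ g1').
  by apply: (U_lem ha g1 g1') => z; rewrite -g2 -g2'.
move=> /(congr1 val) /= e z.
have [g1 g2] := hG (repr X); have [g1' g2'] := hG (repr Y).
rewrite g2 g2'.
have h : assoc (G (repr X)) (G (repr Y)).
  apply: as_trans (hnth _ g1) _; rewrite e; exact: as_sym (hnth _ g1').
exact: dvz_as.
Qed.
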